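(* Let $q$ be a prime power and let $f(T)\in\mathbb{F}_q[T]$ be a monic polynomial of degree $d$ such that $D^2f\neq 0$, $\deg f'\ge 1$, and the polynomials $\widetilde{f}(x,y)-f'(x)$ and $\widetilde{f'}(x,y)$ have no common factor other than possibly a power of $x-y$. Then for all but at most $d^2-2d$ values of $s\in\overline{\mathbb{F}_q}$, there exists $b\in\overline{\mathbb{F}_q}$ such that the polynomial $f(T)+sT+b$ has, over $\overline{\mathbb{F}_q}$, exactly one root of multiplicity $2$ and $d-2$ simple roots (and no other roots).
   Context: $\widetilde{f}(x,y)$ is defined by $f(x)-f(y)=(x-y)\widetilde{f}(x,y)$ (and similarly $\widetilde{f'}$ for the derivative $f'$). The $j$-th Hasse derivative of $f=\sum_i a_iT^i$ is $D^jf=\sum_i\binom{i}{j}a_iT^{i-j}$. *)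

(* Defs.v *)
From HB Require Import structures.
From mathcomp Require Import all_boot all_order all_algebra all_field.
Set Implicit Arguments. Unset Strict Implicit. Unset Printing Implicit Defensive.
Import GRing.Theory.
Local Open Scope ring_scope.

(* Bivariate polynomials in x, y over R are represented as {poly {poly R}}:
   the inner variable is x, the outer variable is y.  A polynomial p(x) in x
   alone is the constant (in y) polynomial p%:P. *)

(* The divided difference  p~(x,y)  with  p(x) - p(y) = (x - y) p~(x,y).
   For p = sum_i a_i T^i,  p~(x,y) = sum_i a_i sum_{j<i} x^j y^(i-1-j). *)
Definition divdiff (R : nzRingType) (p : {poly R}) : {poly {poly R}} :=
  \sum_(i < size p)
     (p`_i)%:P%:P * \sum_(j < i) ((('X^j : {poly R})%:P) * 'X^(i.-1 - j)).

Definition xmy (R : nzRingType) : {poly {poly R}} := ('X : {poly R})%:P - 'X.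

(* Divisibility in the ring R[x,y] (genuine ring divisibility). *)
Definition bdvd (R : nzRingType) (g h : {poly {poly R}}) : Prop :=
  exists r : {poly {poly R}}, h = r * g.

Definition only_xmy_common (F : fieldType) (A B : {poly {poly F}}) : Prop :=
  forall g : {poly {poly F}}, bdvd g A -> bdvd g B ->
    exists (c : F) (k : nat), c != 0 /\ g = c%:P%:P * (xmy F) ^+ k.

(* Main.v *)
Require Import Defs.
From HB Require Import structures.
From mathcomp Require Import all_boot all_order all_algebra all_field.
From mathcomp Require Import fingroup perm.
From mathcomp Require Import zify ring.
From Stdlib Require Import Classical.
Import GRing.Theory.
Local Open Scope ring_scope.

Set Implicit Arguments. Unset Strict Implicit. Unset Printing Implicit Defensive.

Definition szle (R : nzRingType) (q : {poly R}) (W : int) :=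
  q = 0 \/ ((size q)%:Z <= W + 1)%R.

Lemma szle_add (R : nzRingType) (p q : {poly R}) W :
  szle p W -> szle q W -> szle (p + q) W.
Proof.
move=> [->|hp] [->|hq]; rewrite ?add0r ?addr0; try by [left|right].
right; have := size_polyD p q; lia.
Qed.

Lemma szle_mul (R : idomainType) (p q : {poly R}) W1 W2 :
  szle p W1 -> szle q W2 -> szle (p * q) (W1 + W2).
Proof.
move=> [->|hp]; first by left; rewrite mul0r.
move=> [->|hq]; first by left; rewrite mulr0.
have [->|p0] := eqVneq p 0; first by left; rewrite mul0r.
have [->|q0] := eqVneq q 0; first by left; rewrite mulr0.
right; rewrite size_mul //.
have a : (0 < size p)%N by rewrite size_poly_gt0.
have b : (0 < size q)%N by rewrite size_poly_gt0.
rewrite -subn1. clear p0 q0. set sp := size p in hp a *. set sq := size q in hq b *. lia.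
Qed.

Lemma szle_sum (R : nzRingType) (I : Type) (r : seq I) (P : pred I) (F : I -> {poly R}) W :
  (forall i, P i -> szle (F i) W) -> szle (\sum_(i <- r | P i) F i) W.
Proof.
move=> h; apply: (big_ind (fun q => szle q W)).
- by left.
- move=> x y; exact: szle_add.
- exact: h.
Qed.

Lemma szle_prod (R : idomainType) (I : Type) (r : seq I) (F : I -> {poly R}) (w : I -> int) :
  (forall i, szle (F i) (w i)) -> szle (\prod_(i <- r) F i) (\sum_(i <- r) w i).
Proof.
move=> h; elim: r => [|x r IH]; first by rewrite !big_nil; right; rewrite size_poly1.
rewrite !big_cons; exact: szle_mul.
Qed.

Lemma szle_sign (R : nzRingType) (q : {poly R}) (s : bool) W :
  szle q W -> szle ((-1) ^+ s * q) W.
Proof.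
case: s; rewrite ?expr0 ?expr1 ?mul1r ?mulN1r //.
by move=> [->|h]; [left; rewrite oppr0 | right; rewrite size_polyN].
Qed.

Lemma szle_det (R : idomainType) n (M : 'M[{poly R}]_n) (a b : 'I_n -> int) :
  (forall i j, szle (M i j) (a i + b j)) ->
  szle (\det M) (\sum_i a i + \sum_j b j).
Proof.
move=> h; rewrite /determinant; apply: szle_sum => s _.
apply: szle_sign.
have -> : \sum_i a i + \sum_j b j = \sum_i (a i + b ((s : 'S_n) i)).
  rewrite big_split /=; congr (_ + _).
  by rewrite (reindex_inj (@perm_inj _ s)).
exact: szle_prod.
Qed.

Lemma szle_mono (R : nzRingType) (q : {poly R}) W1 W2 :
  (W1 <= W2)%R -> szle q W1 -> szle q W2.
Proof. by move=> h [->|h2]; [left | right; lia]. Qed.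

Lemma ar1 (m x y : nat) : (y <= x)%N -> (m%:Z - (x - y)%N%:Z <= m%:Z + y%:Z - x%:Z)%R.
Proof. lia. Qed.
Lemma ar2 (n x y nv : nat) : (y <= x)%N ->
  (n%:Z - (x - y)%N%:Z <= n%:Z + (nv + y)%N%:Z - nv%:Z - x%:Z)%R.
Proof. lia. Qed.

Lemma res_szle (R : idomainType) (p q : {poly {poly R}}) (m n : nat) :
  (forall i, szle p`_i (m%:Z - i%:Z)) -> (forall i, szle q`_i (n%:Z - i%:Z)) ->
  ((size p).-1 <= m)%N -> ((size q).-1 <= n)%N ->
  szle (resultant p q) (m * n)%N.
Proof.
move=> hp hq hm hn.
pose a (i : 'I_((size q).-1 + (size p).-1)) : int :=
  if (i < (size q).-1)%N then m%:Z + (i : nat)%:Z else n%:Z + (i : nat)%:Z - ((size q).-1)%:Z.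
pose b (j : 'I_((size q).-1 + (size p).-1)) : int := - (j : nat)%:Z.
have H := @szle_det R _ (Sylvester_mx p q) a b.
have {H} : szle (resultant p q) (\sum_i a i + \sum_j b j).
  apply: H => i j; rewrite Sylvester_mxE /a /b.
  case: splitP => k ->.
    idtac.
    case: (leqP k j) => kj; last by left; rewrite mulr0n.
    rewrite mulr1n; apply: szle_mono (hp _); exact: ar1.
  idtac.
  case: (leqP k j) => kj; last by left; rewrite mulr0n.
  rewrite mulr1n; apply: szle_mono (hq _); exact: ar2.
apply: szle_mono.
set nu := (size p).-1 in hm *; set nv := (size q).-1 in hn *.
rewrite !big_split_ord /= /a /b.
have e1 : \sum_(i < nv) (if (lshift nu i < nv)%N then m%:Z + (lshift nu i : nat)%:Z
     else n%:Z + (lshift nu i : nat)%:Z - nv%:Z) + \sum_(i < nv) - (lshift nu i : nat)%:Z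
     = \sum_(i < nv) m%:Z.
  rewrite -big_split; apply: eq_bigr => i _ /=; rewrite ltn_ord; lia.
have e2 : \sum_(i < nu) (if (rshift nv i < nv)%N then m%:Z + (rshift nv i : nat)%:Z
     else n%:Z + (rshift nv i : nat)%:Z - nv%:Z) + \sum_(i < nu) - (rshift nv i : nat)%:Z
     = \sum_(i < nu) (n%:Z - nv%:Z).
  rewrite -big_split; apply: eq_bigr => i _ /=; rewrite ltnNge leq_addr /=; lia.
rewrite addrACA e1 e2 !sumr_const !card_ord.
have : (n - nv)%N%:Z = n%:Z - nv%:Z by lia.
move=> e; rewrite -e; clear e e1 e2 a b hp hq.
nia.
Qed.


Section Gauss.
Variables (F : fieldType) (L : closedFieldType) (iota : {rmorphism F -> L}).

Definition evc (a : L) : commr_rmorph iota a := fun x => mulrC _ _.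
Local Notation ev a := (horner_morph (evc a)).

Lemma evE a t : ev a t = (map_poly iota t).[a].
Proof. by []. Qed.

Lemma MP (a : L) (c : {poly F}) : c != 0 -> ev a c = 0 ->
  exists p0, [/\ p0 != 0, ev a p0 = 0 & forall t, ev a t = 0 -> p0 %| t].
Proof.
have : (size c <= size c)%N by [].
move: {2}(size c) => n; elim: n c => [|n IH] c hs hc he.
  by move: hc; rewrite -size_poly_eq0; move: hs; rewrite leqn0 => ->.
case: (classic (forall t, ev a t = 0 -> c %| t)) => [h|].
  by exists c.
move=> /not_all_ex_not [t ht].
have ht0 := not_imply_elim _ _ ht; have ht1 := not_imply_elim2 _ _ ht.
have r0 : t %% c != 0 by apply/negP => /eqP/modp_eq0P.
have er : ev a (t %% c) = 0.
  have := divp_eq t c; move/(congr1 (ev a)).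
  by rewrite rmorphD rmorphM /= he mulr0 add0r ht0 => <-.
apply: (IH (t %% c)) => //.
by rewrite -ltnS (leq_trans _ hs) // ltn_modp.
Qed.

Definition prim (g : {poly {poly F}}) :=
  forall t : {poly F}, (forall i, t %| g`_i) -> (size t <= 1)%N.

Lemma divcoef (t : {poly F}) (g : {poly {poly F}}) : t != 0 ->
  (forall i, t %| g`_i) -> g = t%:P * \poly_(i < size g) (g`_i %/ t).
Proof.
move=> t0 h; apply/polyP => i; rewrite coefCM coef_poly.
case: ltnP => hi; first by rewrite mulrC divpK.
by rewrite mulr0 nth_default.
Qed.

Lemma ev_nonconst a (p : {poly F}) : p != 0 -> ev a p = 0 -> (1 < size p)%N.
Proof.
move=> p0 e; rewrite ltnNge; apply/negP => hs.
have [c c0 ec] : exists2 c, c != 0 & p = c%:P.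
  by apply/size_poly1P; rewrite eqn_leq hs lt0n size_poly_eq0.
by move: e; rewrite ec evE map_polyC hornerC => /eqP; rewrite fmorph_eq0 (negPf c0).
Qed.

Lemma Gauss (g : {poly {poly F}}) : prim g ->
  forall (c : {poly F}) p q, c != 0 -> c *: p = q * g -> exists q', p = q' * g.
Proof.
move=> pg c; have : (size c <= size c)%N by [].
move: {2}(size c) => n; elim: n c => [|n IH] c hs p q hc he.
  by move: hc; rewrite -size_poly_eq0; move: hs; rewrite leqn0 => ->.
have [hc1|hc1] := leqP (size c) 1.
  have [c0 c00 ec] : exists2 c0, c0 != 0 & c = c0%:P.
    by apply/size_poly1P; rewrite eqn_leq hc1 lt0n size_poly_eq0.
  exists ((c0^-1)%:P%:P * q); rewrite -mulrA -he -mul_polyC mulrA -rmorphM.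
  by rewrite ec -rmorphM mulVf // !rmorph1 mul1r.
have [a ra] : exists a, root (map_poly iota c) a.
  by apply/closed_rootP; rewrite size_map_poly; case: (size c) hc1 => [|[]].
have eca : ev a c = 0 by apply/eqP.
have [p0 [p00 e0 hp0]] := MP hc eca.
have p0c : p0 %| c by exact: hp0.
have := he; move/(congr1 (map_poly (ev a))).
rewrite -mul_polyC !rmorphM /= map_polyC /= eca mul0r => /esym/eqP.
rewrite mulf_eq0 => /orP [] /eqP hm; last first.
  have : (size p0 <= 1)%N.
    apply: pg => i; apply: hp0; by rewrite -coef_map hm coef0.
  by rewrite leqNgt (ev_nonconst p00 e0).
have hq : forall i, p0 %| q`_i by move=> i; apply: hp0; rewrite -coef_map hm coef0.
have eq2 := divcoef p00 hq.
set q2 := \poly_(i < size q) _ in eq2.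
set c2 := c %/ p0.
have ec2 : c = c2 * p0 by rewrite divpK.
have c20 : c2 != 0 by apply: contraNneq hc => h; rewrite ec2 h mul0r.
apply: (IH c2 _ p q2) => //.
  have hsp0 := ev_nonconst p00 e0.
  move: hs; rewrite ec2 size_mul //.
  set a1 := size c2; set a2 := size p0 in hsp0 *; rewrite -subn1. lia.
apply: (@mulfI _ p0%:P); first by rewrite polyC_eq0.
rewrite mulrA -eq2 -he ec2 -!mul_polyC mulrA -rmorphM [p0 * _]mulrC.
reflexivity.
Qed.

Definition pdiv (g p : {poly {poly F}}) :=
  exists c : {poly F}, exists q, c != 0 /\ c *: p = q * g.

Lemma prim_exists (U V G : {poly {poly F}}) : (1 < size G)%N -> pdiv G U -> pdiv G V ->
  exists g : {poly {poly F}}, [/\ (1 < size g)%N, pdiv g U, pdiv g V & prim g].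
Proof.
have : (size (lead_coef G) <= size (lead_coef G))%N by [].
move: {2}(size (lead_coef G)) => n; elim: n G => [|n IH] G hs hG hU hV.
  move: hs; rewrite leqn0 size_poly_eq0 lead_coef_eq0 => /eqP G0.
  by move: hG; rewrite G0 size_poly0.
case: (classic (prim G)) => [h|]; first by exists G.
move=> /not_all_ex_not [t ht0].
have htd := not_imply_elim _ _ ht0; have ht := not_imply_elim2 _ _ ht0.
have t1 : (1 < size t)%N by rewrite ltnNge; apply/negP.
have t0 : t != 0 by rewrite -size_poly_eq0; case: (size t) t1.
have eG := divcoef t0 htd; set G' := \poly_(i < size G) _ in eG.
have G0 : G != 0 by rewrite -size_poly_eq0; case: (size G) hG.
have G'0 : G' != 0 by apply: contraNneq G0 => h; rewrite eG h mulr0.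
have sG : size G' = size G by rewrite eG size_Cmul.
apply: (IH G') => //.
- have : lead_coef G = t * lead_coef G' by rewrite eG lead_coefM lead_coefC.
  move=> el; move: hs; rewrite el size_mul //; last by rewrite lead_coef_eq0.
  have h1 : (0 < size (lead_coef G'))%N by rewrite size_poly_gt0 lead_coef_eq0.
  set a1 := size (lead_coef G') in h1 *; set a2 := size t in t1 *; rewrite -subn1; lia.
- by rewrite sG.
- by case: hU => c [q [c0 e]]; exists c, (q * t%:P); split => //; rewrite -mulrA -eG.
- by case: hV => c [q [c0 e]]; exists c, (q * t%:P); split => //; rewrite -mulrA -eG.
Qed.

Lemma res0_common (U V : {poly {poly F}}) : resultant U V = 0 ->
  exists g : {poly {poly F}}, [/\ (1 < size g)%N, exists r, U = r * g & exists r, V = r * g].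
Proof.
move=> /eqP; rewrite resultant_eq0 => hg.
have pd : forall p, gcdp U V %| p -> pdiv (gcdp U V) p.
  move=> p /Pdiv.Idomain.dvdpP [[c q] /= c0 e]; by exists c, q.
have [g [g1 [c1 [q1 [c10 e1]]] [c2 [q2 [c20 e2]]] pg]] :=
  prim_exists hg (pd _ (dvdp_gcdl U V)) (pd _ (dvdp_gcdr U V)).
exists g; split => //.
- exact: Gauss pg _ _ _ c10 e1.
- exact: Gauss pg _ _ _ c20 e2.
Qed.

End Gauss.


Lemma taylor_comp (K : comNzRingType) (p : {poly K}) (c : K) :
  p \Po ('X + c%:P) = \sum_(i < size p) (p^`N(i)).[c] *: 'X^i.
Proof.
rewrite /comp_poly addrC nderiv_taylor; last exact: mulrC.
rewrite size_map_polyC; apply: eq_bigr => i _.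
by rewrite nderivn_map horner_map /= mul_polyC.
Qed.

Section Biv.
Variable R : comNzRingType.
Local Notation xP := (('X : {poly R})%:P : {poly {poly R}}).

Lemma xmy_divdiff (p : {poly R}) :
  xmy R * divdiff p = p%:P - map_poly polyC p.
Proof.
have e1 : p%:P = \sum_(i < size p) (p`_i)%:P%:P * (('X^i : {poly R})%:P).
  rewrite -{1}[p]coefK poly_def rmorph_sum; apply: eq_bigr => i _.
  by rewrite -mul_polyC rmorphM.
have e2 : map_poly polyC p = \sum_(i < size p) (p`_i)%:P%:P * 'X^i.
  rewrite -{1}[p]coefK poly_def rmorph_sum /=; apply: eq_bigr => i _.
  by rewrite map_polyZ map_polyXn mul_polyC.
rewrite e1 e2 -sumrB /divdiff big_distrr; apply: eq_bigr => i _ /=.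
rewrite -mulrBr mulrCA; congr (_ * _).
rewrite /xmy -[_ - 'X]opprB mulNr rmorphXn /= -[_ - 'X^i]opprB subrXX.
congr (- (_ * _)).
by apply: eq_bigr => j _; rewrite rmorphXn mulrC.
Qed.

Lemma taylor_biv (p : {poly R}) :
  map_poly polyC p \Po ('X + xP) = \sum_(i < size p) (p^`N(i))%:P * 'X^i.
Proof.
rewrite taylor_comp size_map_polyC; apply: eq_bigr => i _.
by rewrite nderivn_map -/(comp_poly 'X _) comp_polyXr mul_polyC.
Qed.

Definition phi (Q : {poly {poly R}}) := Q \Po ('X + xP).
Definition psi (Q : {poly {poly R}}) := Q \Po ('X - xP).

Lemma psiK Q : psi (phi Q) = Q.
Proof. exact: comp_polyXaddC_K. Qed.

Lemma phiK Q : phi (psi Q) = Q.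
Proof.
have := comp_polyXaddC_K Q (- 'X); rewrite /phi /psi polyCN opprK; done.
Qed.

Lemma phiM P Q : phi (P * Q) = phi P * phi Q.
Proof. exact: comp_polyM. Qed.

Lemma psiM P Q : psi (P * Q) = psi P * psi Q.
Proof. exact: comp_polyM. Qed.

Lemma phiC c : phi c%:P = c%:P.
Proof. exact: comp_polyC. Qed.

Lemma phi_xmy : phi (xmy R) = - 'X.
Proof. by rewrite /phi /xmy comp_polyB comp_polyC comp_polyX opprD addrCA subrr addr0. Qed.

Lemma phiXn P k : phi (P ^+ k) = phi P ^+ k.
Proof. exact: (rmorphXn (comp_poly ('X + xP))). Qed.

Lemma phiB P Q : phi (P - Q) = phi P - phi Q.
Proof. exact: comp_polyB. Qed.

End Biv.


Section UV.
Variable R : idomainType.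

Definition Upol (f : {poly R}) : {poly {poly R}} := \poly_(i < (size f).-2) f^`N(i.+2).
Definition Vpol (f : {poly R}) : {poly {poly R}} :=
  \poly_(i < (size f^`()).-1) (f^`())^`N(i.+1).

Lemma phiA (f : {poly R}) : (2 < size f)%N ->
  phi (divdiff f - (f^`())%:P) = 'X * Upol f.
Proof.
move=> hs; apply: (@mulfI _ (- 'X)); first by rewrite oppr_eq0 polyX_eq0.
have [n hn] : exists n, size f = n.+3 by exists (size f - 3)%N; lia.
rewrite -{1}phi_xmy -phiM mulrBr xmy_divdiff !phiB phiM phi_xmy !phiC /phi taylor_biv.
rewrite /Upol hn 2!big_ord_recl /= nderivn0 nderivn1 expr0 expr1 mulr1.
have -> : \sum_(i < n.+1) (f^`N(bump 0 (bump 0 i)))%:P * 'X^(bump 0 (bump 0 i))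
   = 'X * ('X * \sum_(i < n.+1) f^`N(i.+2) *: 'X^i).
  rewrite mulrA big_distrr; apply: eq_bigr => i _ /=.
  by rewrite /bump /= !add1n -mul_polyC !exprS; ring.
rewrite poly_def.
set S := \sum_(i < _) _.
ring.
Qed.

Lemma phiB0 (f : {poly R}) : (1 < size f^`())%N ->
  phi (divdiff f^`()) = Vpol f.
Proof.
move=> hs; apply: (@mulfI _ (- 'X)); first by rewrite oppr_eq0 polyX_eq0.
have [n hn] : exists n, size f^`() = n.+2 by exists (size f^`() - 2)%N; lia.
rewrite -{1}phi_xmy -phiM xmy_divdiff !phiB !phiC /phi taylor_biv.
rewrite /Vpol hn big_ord_recl /= nderivn0.
have -> : \sum_(i < n.+1) ((f^`())^`N(bump 0 i))%:P * 'X^(bump 0 i)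
   = 'X * \sum_(i < n.+1) (f^`())^`N(i.+1) *: 'X^i.
  rewrite big_distrr; apply: eq_bigr => i _ /=.
  by rewrite /bump /= !add1n -mul_polyC !exprS; ring.
rewrite poly_def.
set S := \sum_(i < _) _.
ring.
Qed.
End UV.


Lemma res_neq0 (F : fieldType) (L : closedFieldType) (iota : {rmorphism F -> L})
  (f : {poly F}) : (2 < size f)%N -> (1 < size f^`())%N -> f^`N(2) != 0 ->
  only_xmy_common (divdiff f - (f^`())%:P) (divdiff f^`()) ->
  resultant (Upol f) (Vpol f) != 0.
Proof.
move=> h2 h1 hD hc; apply/negP => /eqP h0.
have [g [g1 [r1 e1] [r2 e2]]] := res0_common iota h0.
have [c [k [c0 eg]]] : exists (c : F) (k : nat), c != 0 /\ psi g = c%:P%:P * (xmy F) ^+ k.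
  apply: hc.
  - exists (psi ('X * r1)); rewrite -psiM -mulrA -e1 -phiA // psiK //.
  - by exists (psi r2); rewrite -psiM -e2 -phiB0 // psiK.
have eg2 : g = c%:P%:P * (- 'X) ^+ k by rewrite -[g]phiK eg phiM phiC phiXn phi_xmy.
case: k eg eg2 => [|k] _ eg2.
  by move: g1; rewrite eg2 expr0 mulr1 size_polyC; case: (c%:P == 0).
have : (Upol f)`_0 = 0.
  have -> : Upol f = - (r1 * c%:P%:P * (- 'X) ^+ k) * 'X by rewrite e1 eg2 exprSr; ring.
  by rewrite coefMX.
rewrite /Upol coef_poly; case: (size f) h2 => [|[|[|n]]] //= _.
by move/eqP; rewrite (negPf hD).
Qed.


Lemma size_nderivn (R : nzRingType) (p : {poly R}) n : (size p^`N(n) <= size p - n)%N.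
Proof.
apply/leq_sizeP => j hj; rewrite coef_nderivn nth_default ?mul0rn //.
move: hj; set z := size p; lia.
Qed.

Lemma nderivn_top (R : nzRingType) (p : {poly R}) : p^`N((size p).-1) = (lead_coef p)%:P.
Proof.
apply/polyP => i; rewrite coef_nderivn coefC; case: i => [|i] /=.
  by rewrite addn0 binn mulr1n.
rewrite nth_default ?mul0rn //; set z := size p; lia.
Qed.

Section UVfacts.
Variable R : idomainType.
Variables (f : {poly R}) (d : nat).
Hypothesis hf : size f = d.+1.
Hypothesis h2 : (2 < size f)%N.
Hypothesis h1 : (1 < size f^`())%N.

Lemma size_deriv_le : (size f^`() <= d)%N.
Proof.
have f0 : f != 0 by rewrite -size_poly_eq0 hf.
by have := lt_size_deriv f0; rewrite hf ltnS.
Qed.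

Lemma U_szle i : szle (Upol f)`_i ((d - 2)%N%:Z - i%:Z).
Proof.
rewrite /Upol coef_poly; case: ltnP => hi; last by left.
right; have := size_nderivn f i.+2; rewrite hf => hs.
have hd : (2 <= d)%N by lia.
move: hi; rewrite hf => hi; set z := size _ in hs *; lia.
Qed.

Lemma V_szle i : szle (Vpol f)`_i ((d - 2)%N%:Z - i%:Z).
Proof.
rewrite /Vpol coef_poly; case: ltnP => hi; last by left.
right; have := size_nderivn f^`() i.+1; have := size_deriv_le => hd hs.
have hd2 : (2 <= d)%N by lia.
have h1' := h1; set z := size _ in hs *; set y := size f^`() in hd hi hs h1'; lia.
Qed.

Lemma size_U : ((size (Upol f)).-1 <= d - 2)%N.
Proof. have := size_poly (size f).-2 (fun i => f^`N(i.+2)); rewrite -/(Upol f) hf.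
set z := size (Upol f); lia. Qed.

Lemma size_V : ((size (Vpol f)).-1 <= d - 2)%N.
Proof.
have := size_poly (size f^`()).-1 (fun i => (f^`())^`N(i.+1)); rewrite -/(Vpol f).
have := size_deriv_le; set z := size (Vpol f); set y := size f^`(); lia.
Qed.

Lemma lead_U : f \is monic -> lead_coef (Upol f) = 1.
Proof.
move=> /monicP hm; rewrite /Upol lead_coef_poly; last first.
- have -> : ((size f).-2).-1.+2 = (size f).-1 by lia.
  by rewrite nderivn_top hm oner_eq0.
- lia.
have -> : ((size f).-2).-1.+2 = (size f).-1 by lia.
by rewrite nderivn_top hm.
Qed.

Lemma lead_V : lead_coef (Vpol f) = (lead_coef f^`())%:P.
Proof.
have hne : f^`() != 0 by rewrite -size_poly_eq0; lia.
rewrite /Vpol lead_coef_poly; last first.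
- have -> : ((size f^`()).-1).-1.+1 = (size f^`()).-1 by lia.
  by rewrite nderivn_top polyC_eq0 lead_coef_eq0.
- lia.
have -> : ((size f^`()).-1).-1.+1 = (size f^`()).-1 by lia.
by rewrite nderivn_top.
Qed.

Lemma res_size : resultant (Upol f) (Vpol f) != 0 ->
  (size (resultant (Upol f) (Vpol f)) <= ((d - 2) * (d - 2)).+1)%N.
Proof.
move=> h; have := res_szle U_szle V_szle size_U size_V.
move=> [e|]; first by rewrite e eqxx in h.
set z := size _; lia.
Qed.

End UVfacts.


Lemma size_map_le (aR rR : nzSemiRingType) (g : aR -> rR) (p : {poly aR}) :
  (size (map_poly g p) <= size p)%N.
Proof. by rewrite /map_poly; apply: size_poly. Qed.

Section Bad.
Variables (F : fieldType) (L : closedFieldType) (iota : {rmorphism F -> L}).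

Lemma bad_pair (f : {poly F}) (r a : L) : (2 < size f)%N -> (1 < size f^`())%N ->
  f \is monic -> a != r ->
  (map_poly iota f).[a] - (map_poly iota f).[r] = (map_poly iota f^`()).[r] * (a - r) ->
  (map_poly iota f^`()).[a] = (map_poly iota f^`()).[r] ->
  horner_morph (evc iota r) (resultant (Upol f) (Vpol f)) = 0.
Proof.
move=> h2 h1 hm ar e1 e2.
set ev := horner_morph (evc iota r).
have evE t : ev t = (map_poly iota t).[r] by [].
set w := a - r.
have w0 : w != 0 by rewrite subr_eq0.
have ha : a = r + w by rewrite /w addrC subrK.
have [n hn] : exists n, size f = n.+3 by exists (size f - 3)%N; lia.
have [m hm'] : exists m, size f^`() = m.+2 by exists (size f^`() - 2)%N; lia.
have Uw : (map_poly ev (Upol f)).[w] = 0.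
  have T := nderiv_taylor (map_poly iota f) (mulrC r w).
  rewrite -ha size_map_poly hn 2!big_ord_recl /= nderivn0 nderivn1 expr0 expr1 mulr1 in T.
  rewrite deriv_map in T.
  have : w ^+ 2 * (map_poly ev (Upol f)).[w] = 0.
    rewrite (horner_coef_wide _ (n := n.+1)); last first.
      apply: leq_trans (size_map_le _ _) _.
      by apply: leq_trans (size_poly _ _) _; rewrite hn.
    rewrite big_distrr /=.
    have -> : \sum_(i < n.+1) w ^+ 2 * ((map_poly ev (Upol f))`_i * w ^+ i) =
       \sum_(i < n.+1) (map_poly iota f)^`N(bump 0 (bump 0 i)).[r] * w ^+ bump 0 (bump 0 i).
      apply: eq_bigr => i _; rewrite coef_map /Upol coef_poly hn /= ltn_ord /horner_morph.
      by rewrite nderivn_map /bump /= !add1n !exprS; ring.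
    move: T e1; set S := \sum_(i < _) _ => T; rewrite T; move=> e1.
    move: e1; move: (map_poly iota f).[r] (map_poly iota f^`()).[r] => u v e1.
    have -> : S = (u + (v * w + S) - u) - v * w by ring.
    by rewrite e1 /w; ring.
  by move/eqP; rewrite mulf_eq0 expf_eq0 /= (negPf w0) => /eqP.
have Vw : (map_poly ev (Vpol f)).[w] = 0.
  have T := nderiv_taylor (map_poly iota f^`()) (mulrC r w).
  rewrite -ha size_map_poly hm' big_ord_recl /= nderivn0 in T.
  have : w * (map_poly ev (Vpol f)).[w] = 0.
    rewrite (horner_coef_wide _ (n := m.+1)); last first.
      apply: leq_trans (size_map_le _ _) _.
      by apply: leq_trans (size_poly _ _) _; rewrite hm'.
    rewrite big_distrr /=.
    have -> : \sum_(i < m.+1) w * ((map_poly ev (Vpol f))`_i * w ^+ i) =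
       \sum_(i < m.+1) (map_poly iota f^`())^`N(bump 0 i).[r] * w ^+ bump 0 i.
      apply: eq_bigr => i _; rewrite coef_map /Vpol coef_poly hm' /= ltn_ord /horner_morph.
      by rewrite nderivn_map /bump /= !add1n !exprS; ring.
    move: T e2; set S := \sum_(i < _) _ => T; rewrite T; move=> e2.
    move: e2; move: (map_poly iota f^`()).[r] => u e2.
    have -> : S = (u * w ^+ 0 + S) - u by rewrite expr0 mulr1; ring.
    by rewrite e2 subrr.
  by move/eqP; rewrite mulf_eq0 (negPf w0) => /eqP.
have lU := lead_U hn h2 h1 hm.
have lV := lead_V hn h2 h1.
transitivity (resultant (map_poly ev (Upol f)) (map_poly ev (Vpol f))).
  apply: map_resultant.
  - by rewrite lU rmorph1 oner_eq0.
  - rewrite lV; change (horner_morph (evc iota r) (lead_coef f^`())%:P != 0).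
    rewrite horner_morphC.
    rewrite fmorph_eq0 lead_coef_eq0 -size_poly_eq0; set z := size _; lia.
apply/eqP; rewrite resultant_eq0.
have U0 : map_poly ev (Upol f) != 0.
  rewrite map_poly_eq0_id0; first by rewrite -lead_coef_eq0 lU oner_eq0.
  by rewrite /ev lU -[1]polyC1 horner_morphC rmorph1 oner_eq0.
have hd : ('X - w%:P) %| gcdp (map_poly ev (Upol f)) (map_poly ev (Vpol f)).
  by rewrite dvdp_gcd !dvdp_XsubCl /root Uw Vw eqxx.
have := dvdp_leq _ hd; rewrite size_XsubC; apply.
by rewrite gcdp_eq0 negb_and U0.
Qed.

End Bad.


Lemma roots_list (F : fieldType) (L : closedFieldType) (iota : {rmorphism F -> L})
  (p : {poly F}) : p != 0 ->
  exists rs : seq L, size rs = (size p).-1 /\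
    forall x, root (map_poly iota p) x -> x \in rs.
Proof.
move=> p0; have [rs ers] := closed_field_poly_normal (map_poly iota p).
have l0 : lead_coef (map_poly iota p) != 0.
  by rewrite lead_coef_eq0 map_poly_eq0.
exists rs; split.
  have := congr1 (fun q : {poly L} => size q) ers; rewrite size_map_poly size_scale // size_prod_XsubC.
  by move=> ->.
move=> x; rewrite ers /root hornerZ mulf_eq0 (negPf l0) /=.
by rewrite -/(root _ x) root_prod_XsubC.
Qed.

Lemma not_uniq_perm (T : eqType) (s : seq T) : ~~ uniq s ->
  exists a t, perm_eq s (a :: a :: t).
Proof.
elim: s => [|x s IH] //=; rewrite negb_and negbK => /orP [hx|hu].
  by exists x, (rem x s); rewrite perm_cons perm_to_rem.
have [a [t ht]] := IH hu.
exists a, (x :: t).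
move/seq.permP: ht => ht; apply/seq.permP => q /=; rewrite ht /=.
set u := q x; set v := q a; set c := count _ t; lia.
Qed.

Lemma taylor_factor (L : fieldType) (P : {poly L}) (r : L) :
  (2 < size P)%N -> P.[r] = 0 -> P^`().[r] = 0 ->
  exists Q, P = ('X - r%:P) ^+ 2 * Q /\ Q.[r] = (P^`N(2)).[r].
Proof.
move=> hs e0 e1.
have [n hn] : exists n, size P = n.+3 by exists (size P - 3)%N; lia.
have T := taylor_comp P r.
rewrite hn 2!big_ord_recl /= nderivn0 nderivn1 e0 e1 !scale0r !add0r in T.
pose Qt := \poly_(i < n.+1) (P^`N(i.+2)).[r].
have eT : P \Po ('X + r%:P) = 'X ^+ 2 * Qt.
  rewrite T /Qt poly_def big_distrr; apply: eq_bigr => i _ /=.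
  by rewrite /bump /= !add1n -!mul_polyC !exprS; ring.
exists (Qt \Po ('X - r%:P)); split.
  rewrite -[P in LHS](comp_polyXaddC_K P r) eT comp_polyM.
  by rewrite (rmorphXn (comp_poly ('X - r%:P))) /= comp_polyX.
rewrite horner_comp hornerXsubC subrr horner_coef0 /Qt coef_poly /=.
by [].
Qed.

Lemma double_root (L : fieldType) (P W : {poly L}) (a : L) :
  P = ('X - a%:P) ^+ 2 * W -> P.[a] = 0 /\ P^`().[a] = 0.
Proof.
move=> ->; rewrite expr2 !derivM derivXsubC !hornerE /= subrr; split; ring.
Qed.

Unset Implicit Arguments. Set Strict Implicit. Set Printing Implicit Defensive.

Theorem mainTheorem4 (F : finFieldType) (L : closedFieldType)
  (iota : {rmorphism F -> L})
  (L_alg : forall z : L, exists p : {poly F}, p != 0 /\ root (map_poly iota p) z)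
  (d : nat) (f : {poly F})
  (f_monic : f \is monic) (f_deg : size f = d.+1)
  (hD2 : f^`N(2) != 0)
  (hdf : (1 < size f^`())%N)
  (hcop : only_xmy_common (divdiff f - (f^`())%:P) (divdiff f^`())) :
  exists S : seq L, (size S <= d * d - 2 * d)%N /\
    forall s : L, s \notin S ->
      exists b : L, exists r : L, exists rs : seq L,
        [/\ size rs = (d - 2)%N, uniq (r :: rs) &
          map_poly iota f + s *: 'X + b%:P
            = ('X - r%:P) ^+ 2 * \prod_(a <- rs) ('X - a%:P)].
Proof.
have f0 : f != 0 by rewrite -size_poly_eq0 f_deg.
have h2 : (2 < size f)%N by have := lt_size_deriv f0; set z := size _; set y := size _ in hdf; lia.
have hR := res_neq0 iota h2 hdf hD2 hcop.
have [rs1 [hrs1 hr1]] := roots_list iota hR.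
have [rs2 [hrs2 hr2]] := roots_list iota hD2.
pose fL := map_poly iota f.
pose fL' := map_poly iota f^`().
exists (map (fun x => - fL'.[x]) (rs1 ++ rs2)); split.
  rewrite size_map size_cat hrs1 hrs2.
  have := res_size f_deg h2 hdf hR; have := size_nderivn f 2.
  rewrite f_deg; set z := size _; set y := size _; nia.
move=> s hs.
have hd2 : (2 <= d)%N by move: h2; rewrite f_deg.
have hfL : size fL = d.+1 by rewrite /fL size_map_poly.
have hfL' : size fL' = size f^`() by rewrite /fL' size_map_poly.
have [r hr] : exists r, root (fL' + s%:P) r.
  apply/closed_rootP; rewrite size_addl ?hfL'; first by case: (size f^`()) hdf => [|[]].
  by rewrite size_polyC; case: (s != 0) hdf => /=; set z := size _; lia.
have er : fL'.[r] = - s.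
  by move: hr => /rootP; rewrite hornerD hornerC => /eqP; rewrite addr_eq0 => /eqP.
have nbad : r \notin rs1 ++ rs2.
  apply/negP => h; move: hs; rewrite (_ : s = - fL'.[r]); last by rewrite er opprK.
  by rewrite (map_f (fun x => - fL'.[x]) h).
have nr1 : r \notin rs1 by move: nbad; rewrite mem_cat negb_or => /andP [].
have nr2 : r \notin rs2 by move: nbad; rewrite mem_cat negb_or => /andP [].
have evR : horner_morph (evc iota r) (resultant (Upol f) (Vpol f)) != 0.
  by apply: contra nr1 => /eqP h; apply: hr1; apply/eqP.
have D2r : (map_poly iota f^`N(2)).[r] != 0.
  by apply: contra nr2 => /eqP h; apply: hr2; apply/eqP.
pose b := - (fL.[r] + s * r).
pose P := fL + s *: 'X + b%:P.
have Px x : P.[x] = fL.[x] + s * x + b by rewrite /P !hornerE.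
have dP : P^`() = fL' + s%:P.
  by rewrite /P !derivE /fL' deriv_map addr0 alg_polyC.
have P'x x : P^`().[x] = fL'.[x] + s by rewrite dP !hornerE.
have Pr : P.[r] = 0 by rewrite Px /b; ring.
have P'r : P^`().[r] = 0 by rewrite P'x er; ring.
have lowsz : (size ((s *: 'X + b%:P)%R : {poly L}) <= 2)%N.
  apply: leq_trans (size_polyD _ _) _; rewrite geq_max size_polyC.
  apply/andP; split; last by case: (b != 0).
  by apply: leq_trans (size_scale_leq _ _) _; rewrite size_polyX.
have sP : size P = d.+1.
  rewrite /P -addrA size_addl // hfL; apply: leq_ltn_trans lowsz _; by rewrite ltnS.
have hP2 : P^`N(2) = fL^`N(2).
  by rewrite /P -addrA nderivnD (nderivn_poly0 lowsz) addr0.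
have h3 : (2 < size P)%N by rewrite sP ltnS.
have [Q [eQ Qr]] := taylor_factor h3 Pr P'r.
have Qr0 : Q.[r] != 0 by rewrite Qr hP2 /fL nderivn_map.
have Q0 : Q != 0 by apply: contraNneq Qr0 => ->; rewrite horner0.
have lP : lead_coef P = 1.
  rewrite /P -addrA lead_coefDl; last by rewrite hfL; apply: leq_ltn_trans lowsz _; rewrite ltnS.
  by rewrite /fL lead_coef_map (monicP f_monic) rmorph1.
have mX : ('X - r%:P) ^+ 2 \is monic by rewrite monic_exp // monicXsubC.
have lQ : lead_coef Q = 1.
  by move: lP; rewrite eQ lead_coefM (monicP mX) mul1r.
have sQ : size Q = (d - 1)%N.
  have nX : ('X - r%:P) ^+ 2 != 0 := monic_neq0 mX.
  move: sP; rewrite eQ (size_mul nX Q0) size_exp_XsubC.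
  by rewrite !addSn add0n /= => -[<-]; rewrite subn1.
have [rs ers] := closed_field_poly_normal Q.
rewrite lQ scale1r in ers.
have srs : size rs = (d - 2)%N.
  move: sQ; rewrite ers size_prod_XsubC => e.
  by rewrite -[2%N]/(1 + 1)%N subnDA -e subn1.
exists b, r, rs; split => //; last by rewrite -ers -eQ.
rewrite /=; apply/andP; split.
  apply/negP => hin; move/eqP: Qr0; apply; rewrite ers; apply/rootP.
  by rewrite root_prod_XsubC.
apply/negPn/negP => hnu.
have [a [t ht]] := not_uniq_perm hnu.
have ain : a \in rs by rewrite (perm_mem ht) mem_head.
have ar : a != r.
  apply/eqP => ear; move/eqP: Qr0; apply; apply/eqP.
  by rewrite -ear ers -/(root _ a) root_prod_XsubC.
have eP2 : P = ('X - a%:P) ^+ 2 * (('X - r%:P) ^+ 2 * \prod_(z <- t) ('X - z%:P)).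
  rewrite eQ ers (perm_big _ ht) /= !big_cons; ring.
have [Pa P'a] := double_root eP2.
have := @bad_pair F L iota f r a h2 hdf f_monic ar.
rewrite -/fL -/fL'.
move: Pa P'a; rewrite Px P'x => Pa P'a.
have Pr' : fL.[r] + s * r + b = 0 by rewrite -Px.
have e1 : fL.[a] - fL.[r] = fL'.[r] * (a - r).
  rewrite er.
  have -> : fL.[a] = (fL.[a] + s * a + b) - s * a - b by ring.
  rewrite Pa.
  have -> : fL.[r] = (fL.[r] + s * r + b) - s * r - b by ring.
  rewrite Pr'; ring.
have e2 : fL'.[a] = fL'.[r].
  rewrite er; have -> : fL'.[a] = (fL'.[a] + s) - s by ring.
  by rewrite P'a sub0r.
by move=> /(_ e1 e2) /eqP; rewrite (negPf evR).
Qed.
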